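(* Let $X$ be a graph (multiple edges and loops allowed) which is connected, has countable vertex set, has bounded degree, and has no vertex of degree one. Fix $x_0\in VX$. For $x\in VX$ and $k\ge 0$ let $c_k(x)$ be the number of geodesic loops of length $k$ starting at $x$, let $(\Delta_X c_k)(x)=\deg(x)c_k(x)-\sum_{e\in E_x}c_k(t(e))$, and let $N_m(x_0)$ be the number of closed geodesic paths of length $m$ starting at $x_0$. Then for every integer $m>2$, $$N_m(x_0)=c_m(x_0)-(\deg(x_0)-2)\sum_{i=1}^{\lceil m/2\rceil-1}c_{m-2i}(x_0)+\sum_{i=1}^{\lceil m/2\rceil-1}i\,(\Delta_X c_{m-2i})(x_0),$$ where $\lceil\cdot\rceil$ is the ceiling function.
   Context: A graph $X=(VX,EX)$ consists of disjoint sets $VX$, $EX$ with maps $e\mapsto (o(e),t(e))\in VX\times VX$ and $e\mapsto\bar e$ such that $\bar e\ne e$, $\bar{\bar e}=e$, $o(e)=t(\bar e)$. For $x\in VX$, $E_x=\{e\in EX: o(e)=x\}$ and $\deg(x)=|E_x|$; bounded degree means $\sup_x\deg(x)<\infty$. A path of length $n$ is a sequence of edges $c=(e_1,\dots,e_n)$ with $t(e_i)=o(e_{i+1})$; $o(c)=o(e_1)$, $t(c)=t(e_n)$; it is closed if $o(c)=t(c)$; a vertex is regarded as a path of length $0$. It has a back-tracking if $e_{i+1}=\bar e_i$ for some $i$, and has a tail if $e_n=\bar e_1$. A geodesic loop is a closed path without back-tracking; a closed geodesic path is a geodesic loop without tail. ''Starting at $x$'' means $o(c)=x$. *)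

(* Defs.v *)
(* The star E_x is given as a duplicate-free
   list [star x] with (e \in star x) = (o e == x); this is available exactly
   when all stars are finite (implied by bounded degree). *)
From mathcomp Require Import all_boot all_order all_algebra.
Set Implicit Arguments. Unset Strict Implicit. Unset Printing Implicit Defensive.
Import Order.TTheory GRing.Theory Num.Theory.

Section SerreGraph.
Variables (V E : eqType) (o t : E -> V) (rev : E -> E) (star : V -> seq E).

Definition is_serre_graph : Prop :=
  [/\ forall e, rev e != e,
      forall e, rev (rev e) = e,
      forall e, o e = t (rev e),
      forall x e, (e \in star x) = (o e == x)
    & forall x, uniq (star x)].

Definition deg (x : V) : nat := size (star x).

Definition is_path_from (x : V) (c : seq E) : bool :=
  match c with
  | [::] => true
  | e :: c' => (o e == x) && path (fun e f => t e == o f) e c'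
  end.

Definition endp (x : V) (c : seq E) : V := last x (map t c).

Definition no_backtracking (c : seq E) : bool :=
  match c with
  | [::] => true
  | e :: c' => path (fun e f => f != rev e) e c'
  end.

Definition has_tail (c : seq E) : bool :=
  match c with
  | [::] => false
  | e :: _ => last e c == rev e
  end.

Definition geodesic_loop (x : V) (c : seq E) : bool :=
  [&& is_path_from x c, endp x c == x & no_backtracking c].

Definition closed_geodesic (x : V) (c : seq E) : bool :=
  geodesic_loop x c && ~~ has_tail c.

Fixpoint paths_from (x : V) (n : nat) : seq (seq E) :=
  match n with
  | 0 => [:: [::]]
  | n'.+1 => flatten [seq [seq e :: c | c <- paths_from (t e) n'] | e <- star x]
  end.

Definition ck (k : nat) (x : V) : nat := count (geodesic_loop x) (paths_from x k).

Definition Nm (m : nat) (x : V) : nat := count (closed_geodesic x) (paths_from x m).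

Definition laplacian (f : V -> nat) (x : V) : int :=
  ((deg x)%:Z * (f x)%:Z - \sum_(e <- star x) (f (t e))%:Z)%R.

Definition connected : Prop :=
  forall x y, exists c, is_path_from x c && (endp x c == y).

Definition bounded_degree : Prop := exists D, forall x, deg x <= D.

End SerreGraph.

(* Main.v *)
Require Import Defs.
From mathcomp Require Import all_boot all_order all_algebra zify.
Set Implicit Arguments. Unset Strict Implicit. Unset Printing Implicit Defensive.
Import Order.TTheory GRing.Theory Num.Theory.

Lemma count_bij (T1 T2 : eqType) (l1 : seq T1) (l2 : seq T2)
  (P1 : pred T1) (P2 : pred T2) (f : T1 -> T2) (g : T2 -> T1) :
  uniq l1 -> uniq l2 ->
  (forall c, c \in l1 -> P1 c -> [/\ f c \in l2, P2 (f c) & g (f c) = c]) ->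
  (forall c, c \in l2 -> P2 c -> [/\ g c \in l1, P1 (g c) & f (g c) = c]) ->
  count P1 l1 = count P2 l2.
Proof.
move=> u1 u2 H1 H2.
rewrite -!size_filter.
have inj: {in filter P1 l1 &, injective f}.
  move=> a b; rewrite !mem_filter => /andP[pa la] /andP[pb lb] e.
  have [_ _ <-] := H1 a la pa. have [_ _ <-] := H1 b lb pb. by rewrite e.
rewrite -(size_map f).
apply: perm_size. apply: uniq_perm.
- rewrite map_inj_in_uniq //. exact: filter_uniq.
- exact: filter_uniq.
move=> y; apply/mapP/idP.
  case=> a; rewrite mem_filter => /andP[pa la] ->.
  have [? ? _] := H1 a la pa. by rewrite mem_filter; apply/andP.
rewrite mem_filter => /andP[py ly]. have [? ? ?] := H2 y ly py.
exists (g y) => //. by rewrite mem_filter; apply/andP.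
Qed.

Lemma count3 (T : Type) (s : seq T) (a p q : pred T) :
  count a s + count (fun c => [&& a c, p c & q c]) s =
  count (fun c => [&& a c, ~~ p c & ~~ q c]) s + count (fun c => a c && p c) s
  + count (fun c => a c && q c) s.
Proof.
elim: s => //= c s IH.
case: (a c) (p c) (q c) => [] [] [] /=; rewrite ?add0n ?add1n; lia.
Qed.

Lemma count2 (T : eqType) (s : seq T) a b : uniq s -> a \in s -> b \in s ->
  count (fun e => (a != e) && (b != e)) s + 2 = size s + (b == a).
Proof.
move=> us ain bin.
have Hm : forall z, z \in s -> count (fun e => z == e) s = 1.
  move=> z zs; rewrite -[1]/(nat_of_bool true) -zs -(count_uniq_mem z us); apply: eq_count => e /=; exact: eq_sym.
have -> : count (fun e => (a != e) && (b != e)) s = count (predC (fun e => (a == e) || (b == e))) s.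
  by apply: eq_count => e /=; rewrite negb_or.
have H1 := count_predC (fun e => (a == e) || (b == e)) s.
case: (eqVneq b a) => [eab|nab].
  subst b.
  have : count (fun e => (a == e) || (a == e)) s = 1.
    by rewrite -(Hm a ain); apply: eq_count => e; rewrite orbb.
  move=> H2; lia.
have H2 := count_predUI (fun e => a == e) (fun e => b == e) s.
have H3 : count (predI (fun e => a == e) (fun e => b == e)) s = 0.
  apply/eqP; rewrite -leqn0 leqNgt -has_count; apply/hasP => -[e _ /= /andP[/eqP ae /eqP be]].
  by move: nab; rewrite be -ae eqxx.
rewrite (Hm a ain) (Hm b bin) H3 addn0 in H2.
have H4 : count (fun e => (a == e) || (b == e)) s = 2 by rewrite -[RHS]/(1+1) -H2; apply: eq_count.
lia.
Qed.

Definition dropl (T : Type) (s : seq T) := take (size s).-1 s.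
Lemma droplK (T : Type) (c : seq T) z : dropl (rcons c z) = c.
Proof. by rewrite /dropl size_rcons -cats1 take_size_cat. Qed.

Lemma sumlem (T : eqType) (s : seq T) (F : T -> nat) (G H : pred T) d :
  (forall c, c \in s -> F c + 2 * G c = d * G c + H c) ->
  sumn (map F s) + 2 * count G s = d * count G s + count H s.
Proof.
elim: s => [|c s IH Hall] /=; first by move=> _; rewrite !muln0.
have h1 := Hall c (mem_head _ _).
have h2 := IH (fun c' cs => Hall c' (mem_behead (s := c :: s) cs)).
rewrite !mulnDr; lia.
Qed.

Lemma count_splitq (T : Type) (s : seq T) (a p q : pred T) :
  count (fun c => a c && p c) s =
  count (fun c => [&& a c, p c & ~~ q c]) s + count (fun c => [&& a c, p c & q c]) s.
Proof. elim: s => //= c s ->; case: (a c) (p c) (q c) => [] [] [] /=; lia. Qed.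

Lemma count_andC (T : Type) (s : seq T) (a b : pred T) :
  count (fun c => a c && ~~ b c) s + count (fun c => a c && b c) s = count a s.
Proof. elim: s => //= c s <-; case: (a c) (b c) => [] [] /=; lia. Qed.

Section G.
Variables (V E : eqType) (o t : E -> V) (rv : E -> E) (star : V -> seq E).
Hypothesis Hne : forall e, rv e != e.
Hypothesis HrvK : involutive rv.
Hypothesis Hot : forall e, o e = t (rv e).
Hypothesis Hstar : forall x e, (e \in star x) = (o e == x).
Hypothesis Huniq : forall x, uniq (star x).

Lemma Hto e : t e = o (rv e).
Proof. by rewrite Hot HrvK. Qed.

Notation pf := (is_path_from o t).
Notation P := (paths_from t star).

Lemma pf_cons x e c : pf x (e :: c) = (o e == x) && pf (t e) c.
Proof. case: c => [|f c] /=; first by rewrite andbT. by rewrite [o f == _]eq_sym. Qed.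

Lemma mem_P x n c : (c \in P x n) = pf x c && (size c == n).
Proof.
elim: n x c => [|n IH] x c /=.
  by rewrite inE; case: c => //= e c; rewrite andbF.
apply/flattenP/idP.
  case=> s /mapP[e es ->] /mapP[c' c'in ->].
  by rewrite pf_cons -(Hstar x) es /= -IH.
case: c => [|e c] //; rewrite pf_cons /= eqSS -andbA => /andP[ox].
rewrite -IH => cin.
exists [seq e :: c0 | c0 <- P (t e) n]; first by apply/mapP; exists e; rewrite ?Hstar.
by apply/mapP; exists c.
Qed.

Lemma uniq_P x n : uniq (P x n).
Proof.
elim: n x => [|n IH] x //=.
have: uniq (star x) by [].
elim: (star x) => //= e s IHs /andP[es us].
rewrite cat_uniq IHs // andbT map_inj_uniq ?IH //; last by move=> a b [].
apply/hasPn => c /flattenP[s' /mapP[f fs ->] /mapP[c' _ ->]].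
apply/mapP => -[c'' _ [ef _]]; move: es; by rewrite -ef fs.
Qed.

Lemma count_P_S x n (Q : pred (seq E)) :
  count Q (P x n.+1) = \sum_(e <- star x) count (fun c => Q (e :: c)) (P (t e) n).
Proof.
rewrite /= count_flatten.
elim: (star x) => [|e s IH]; first by rewrite big_nil.
by rewrite big_cons /= count_map IH.
Qed.


Notation GL := (geodesic_loop o t rv).
Notation NB := (no_backtracking rv).
Notation ep := (endp t).

Definition hd_is (a : E) (c : seq E) := if c is f :: _ then f == a else false.
Definition lst_is (a : E) (c : seq E) := if c is f :: c' then last f c' == a else false.

Lemma lst_rcons a c z : lst_is a (rcons c z) = (z == a).
Proof. by case: c => [|f c] //=; rewrite last_rcons. Qed.

Lemma ep_cons x e c : ep x (e :: c) = ep (t e) c.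
Proof. by []. Qed.

Lemma ep_last x e c : ep x (e :: c) = t (last e c).
Proof. by rewrite /endp /= last_map. Qed.

Lemma ep_rcons x c z : ep x (rcons c z) = t z.
Proof. by rewrite /endp map_rcons last_rcons. Qed.

Lemma path_adj e c : path (fun e f => t e == o f) e c = pf (t e) c.
Proof. by case: c => //= f c; rewrite [o f == _]eq_sym. Qed.

Lemma pf_rcons x c z : pf x (rcons c z) = pf x c && (o z == ep x c).
Proof.
case: c => [|f c] /=; first by rewrite andbT.
by rewrite rcons_path -andbA ep_last [o z == _]eq_sym.
Qed.

Lemma rvI : injective rv.
Proof. exact: inv_inj. Qed.

Lemma nb_rv a b : (rv a != rv b) = (a != b).
Proof. by rewrite (inj_eq rvI). Qed.

Lemma E1 x e c : o e = x -> c != [::] ->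
 (GL x (e :: rcons c (rv e)) && has_tail rv (e :: rcons c (rv e))) =
 [&& GL (t e) c, ~~ hd_is (rv e) c & ~~ lst_is e c].
Proof.
move=> oe; case: c => [|f c] // _.
rewrite /geodesic_loop /has_tail /= last_rcons eqxx andbT !ep_last /= last_rcons.
rewrite !rcons_path -Hto -Hot oe eqxx nb_rv [o f == _]eq_sym.
case: (t e == o f); case: (path _ f c); case: (path _ f c); case: (f != rv e) => //=.
all: rewrite ?andbT ?andbF //; case: (t (last f c) == t e) => //=; by rewrite eq_sym.
Qed.

Lemma GL_pf x c : GL x c -> pf x c.
Proof. by case/and3P. Qed.

Lemma size_nil (c : seq E) n : 0 < n -> size c = n -> c != [::].
Proof. move=> n0 sc; apply/eqP => c0; move: sc n0; rewrite c0 /= => <-. by []. Qed.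

Lemma sum_i x n : 0 < n ->
 \sum_(e <- star x) count (fun c => [&& GL (t e) c, ~~ hd_is (rv e) c & ~~ lst_is e c]) (P (t e) n)
 = count (fun c => GL x c && has_tail rv c) (P x n.+2).
Proof.
move=> n0; rewrite count_P_S; apply: eq_big_seq => e es.
have /eqP oe : o e == x by rewrite -Hstar.
apply: (count_bij (f := fun c => rcons c (rv e)) (g := fun d => behead (belast e d))); rewrite ?uniq_P //.
- move=> c; rewrite mem_P => /andP[pc /eqP sc] Hc.
  have cn := size_nil n0 sc.
  have := Hc; rewrite -(E1 oe cn) => /andP[G T]; split => //.
    by rewrite mem_P size_rcons sc eqxx andbT; move: (GL_pf G); rewrite pf_cons => /andP[].
    by apply/andP.
  by rewrite /= belast_rcons.
- move=> d; rewrite mem_P => /andP[pd /eqP sd] /andP[G T].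
  case/lastP: d pd sd G T => [|c z] //= pd; rewrite size_rcons => -[sc] G.
  rewrite /has_tail last_rcons => /eqP zE; subst z.
  have cn := size_nil n0 sc.
  have : GL x (e :: rcons c (rv e)) && has_tail rv (e :: rcons c (rv e)) by rewrite G /has_tail /= last_rcons eqxx.
  rewrite (E1 oe cn) => Hc.
  split => //; last by rewrite /= belast_rcons.
  by rewrite belast_rcons /= mem_P sc eqxx andbT; case/and3P: Hc => /GL_pf.
  by rewrite /= belast_rcons.
Qed.

Definition revp (c : seq E) := rev (map rv c).

Lemma revpK : involutive revp.
Proof. by elim=> // f c IH; rewrite /revp map_rev revK -map_comp (eq_map HrvK) map_id. Qed.

Lemma size_revp c : size (revp c) = size c.
Proof. by rewrite size_rev size_map. Qed.

Lemma revp_cons f c : revp (f :: c) = rcons (revp c) (rv f).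
Proof. by rewrite /revp /= rev_cons. Qed.

Lemma hd_rev a c : hd_is (rv a) c = lst_is a (revp c).
Proof.
case: c => [|f c] //; rewrite revp_cons lst_rcons /=.
by rewrite -(inj_eq rvI) HrvK.
Qed.

Lemma revp_last f c : revp (f :: c) = last (rv f) (map rv c) :: rev (belast (rv f) (map rv c)).
Proof. by rewrite /revp (lastI f c) map_rcons rev_rcons -belast_map -last_map. Qed.

Lemma GL_rev y c : GL y c -> GL y (revp c).
Proof.
case: c => [|f c] //.
rewrite /geodesic_loop {2}revp_cons ep_rcons -Hot revp_last => /and3P[].
rewrite pf_cons /= => /andP[/eqP ofy pc] ey nbc; rewrite ofy eqxx.
rewrite !rev_path !path_map last_map -Hto -(ep_last y) ey /=.
apply/andP; split.
  rewrite -path_adj in pc; rewrite -(eq_path (e := fun a b => t a == o b)) // => a b /=.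
  by rewrite -Hot -Hto eq_sym.
rewrite -(eq_path (e := fun a b => b != rv a)) // => a b /=.
by rewrite HrvK eq_sym.
Qed.

Lemma rev_count y e n :
  count (fun c => GL y c && hd_is (rv e) c) (P y n) =
  count (fun c => GL y c && lst_is e c) (P y n).
Proof.
apply: (count_bij (f := revp) (g := revp)); rewrite ?uniq_P //.
- move=> c; rewrite mem_P => /andP[_ /eqP sc] /andP[G H].
  have G' := GL_rev G.
  by rewrite mem_P size_revp sc eqxx (GL_pf G') G' -hd_rev H revpK.
- move=> c; rewrite mem_P => /andP[_ /eqP sc] /andP[G H].
  have G' := GL_rev G.
  by rewrite mem_P size_revp sc eqxx (GL_pf G') G' hd_rev revpK H.
Qed.

Lemma E3 x e c : o e = x ->
  [&& GL (t e) (rv e :: c), hd_is (rv e) (rv e :: c) & ~~ lst_is e (rv e :: c)] =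
  closed_geodesic o t rv x (rcons c (rv e)).
Proof.
move=> oe; case: c => [|f c].
  rewrite /closed_geodesic /geodesic_loop /has_tail /= eqxx HrvK Hne !andbT.
  by rewrite /endp /= -Hot -Hto oe !eqxx andbT eq_sym.
rewrite /closed_geodesic /geodesic_loop /has_tail /= last_rcons !ep_last /= last_rcons.
rewrite !rcons_path -Hto -Hot oe HrvK !nb_rv !eqxx [x == _]eq_sym [last f c == e]eq_sym [f == e]eq_sym.
by case: (o f == x); case: (path _ f c); case: (path _ f c); case: (_ == _); case: (e != f); case: (e != last f c).
Qed.

Definition R3 (d : seq E) :=
  if d is e :: c then [&& GL (t e) c, hd_is (rv e) c & ~~ lst_is e c] else false.

Definition g3 (d : seq E) := if d is h :: s then rv (last h s) :: rotr 1 d else [::].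

Lemma g3_rcons c z : g3 (rcons c z) = rv z :: z :: c.
Proof.
have -> : g3 (rcons c z) = rv z :: rotr 1 (rcons c z).
  by case: c => [|h c] //=; rewrite last_rcons.
by rewrite rotr1_rcons.
Qed.

Lemma sum_iii x n : 0 < n ->
 \sum_(e <- star x) count (fun c => [&& GL (t e) c, hd_is (rv e) c & ~~ lst_is e c]) (P (t e) n)
 = Nm o t rv star n x.
Proof.
move=> n0.
transitivity (count R3 (P x n.+1)); first by rewrite count_P_S.
apply: (count_bij (f := fun d => rot 1 (behead d)) (g := g3)); rewrite ?uniq_P //.
- case=> [|e c] //; rewrite mem_P pf_cons /= => /andP[/andP[/eqP oe pc] /eqP sc].
  case: c pc sc => [|f c] pc sc; first by case/and3P.
  move=> /and3P[G /eqP fe Hl]; subst f. move: sc => /= -[sc].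
  have Hc : closed_geodesic o t rv x (rcons c (rv e)) by rewrite -E3 // G /= eqxx Hl.
  rewrite rot1_cons g3_rcons HrvK; split => //.
  rewrite mem_P size_rcons sc eqxx andbT.
  by case/andP: Hc => /GL_pf.
- move=> d; rewrite mem_P => /andP[pd /eqP sd] Hd.
  case/lastP: d pd sd Hd => [|c z]; first by move=> _ sd; rewrite -sd in n0.
  move=> pd; rewrite size_rcons => -[sc] Hd.
  have oz : o (rv z) = x.
    by move: Hd => /andP[/and3P[_ /eqP <- _] _]; rewrite ep_rcons -Hto.
  have Hc := E3 c oz; rewrite HrvK Hd in Hc.
  rewrite g3_rcons rot1_cons; split => //.
    rewrite mem_P pf_cons oz eqxx /= sc eqxx andbT.
    by case/and3P: Hc => /GL_pf.
  by rewrite /= HrvK; move: Hc => /= ->.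
Qed.

Lemma E4 x e c : o e = x ->
  [&& GL (t e) (rv e :: rcons c e), hd_is (rv e) (rv e :: rcons c e) & lst_is e (rv e :: rcons c e)] =
  [&& GL x c, c != [::], ~~ hd_is e c & ~~ lst_is (rv e) c].
Proof.
move=> oe; case: c => [|f c].
  by rewrite /= /geodesic_loop /= HrvK eqxx !andbF.
rewrite /geodesic_loop /= last_rcons !ep_last /= last_rcons eqxx.
rewrite !rcons_path -Hto -Hot oe HrvK -[e != rv _]nb_rv HrvK [rv e == last f c]eq_sym [x == _]eq_sym !eqxx.
by case: (o f == x); case: (path _ f c); case: (path _ f c); case: (_ == x); case: (f != e); case: (last f c != rv e).
Qed.

Definition R4 (d : seq E) :=
  if d is e :: c then [&& GL (t e) c, hd_is (rv e) c & lst_is e c] else false.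
Definition P2 x (d : seq E) :=
  if d is e :: c then [&& GL x c, c != [::], ~~ hd_is e c & ~~ lst_is (rv e) c] else false.
Definition f4 (d : seq E) := if d is e :: _ :: s then e :: dropl s else [::].
Definition g4 (d : seq E) := if d is e :: c then e :: rv e :: rcons c e else [::].

Lemma sum_iv_a x k :
  \sum_(e <- star x) count (fun c => [&& GL (t e) c, hd_is (rv e) c & lst_is e c]) (P (t e) k.+2)
  = count (P2 x) [seq e :: c | c <- P x k, e <- star x].
Proof.
transitivity (count R4 (P x k.+3)); first by rewrite count_P_S.
apply: (count_bij (f := f4) (g := g4)); rewrite ?uniq_P //.
- apply: allpairs_uniq; rewrite ?uniq_P //.
  by move=> [c1 e1] [c2 e2] _ _ /= [-> ->].
- case=> [|e c] //; rewrite mem_P pf_cons => /andP[/andP[/eqP oe pc] /eqP sc].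
  case: c pc sc => [|f s] pc sc; first by case/and3P.
  move=> /and3P[G /eqP fe Hl]; subst f.
  case/lastP: s pc sc G Hl => [|c z] pc sc G Hl.
    by move: Hl; rewrite /= (negbTE (Hne e)).
  move: Hl; rewrite /= last_rcons => /eqP ze; subst z.
  have H : P2 x (e :: c) by rewrite /= -(E4 c oe) G /= last_rcons !eqxx.
  rewrite /f4 /g4 droplK; split => //.
  apply/allpairsP; exists (c, e) => /=; split => //.
    rewrite mem_P; move: H => /= /and4P[/GL_pf -> _ _ _] /=.
    by move: sc; rewrite /= size_rcons => -[->].
  by rewrite Hstar oe.
- move=> d /allpairsP[[c e] [cin ein ->]] H; rewrite /= in cin ein H.
  have /eqP oe : o e == x by rewrite -Hstar.
  have Hr : R4 (g4 (e :: c)) by rewrite /= (E4 c oe).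
  rewrite /f4 /g4 droplK; split => //.
  rewrite mem_P pf_cons oe eqxx.
  rewrite -[(c, e).2]/e -[(c, e).1]/c.
  have Hp : pf (t e) (rv e :: rcons c e) by move: Hr => /= /and3P[/GL_pf].
  rewrite Hp /= size_rcons; by move: cin; rewrite mem_P => /andP[_ /eqP ->].
Qed.

Lemma sum_iv_b x k : 0 < k ->
  count (P2 x) [seq e :: c | c <- P x k, e <- star x] + 2 * ck o t rv star k x
  = deg star x * ck o t rv star k x + count (fun c => GL x c && has_tail rv c) (P x k).
Proof.
move=> k0.
rewrite /allpairs count_flatten -map_comp /ck.
apply: sumlem => c; rewrite mem_P => /andP[pc /eqP sc] /=.
rewrite count_map.
case G: (GL x c); last first.
  rewrite muln0 addn0 muln0; apply/eqP; rewrite -leqn0 leqNgt -has_count; apply/hasP => -[e _] /=; by rewrite G.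
have cn := size_nil k0 sc.
move: cn pc sc G; case: c => [|f c] // _ pc sc G.
have ofx : o f == x by move: pc; rewrite pf_cons => /andP[].
have Hl : o (rv (last f c)) == x by rewrite -Hto -(ep_last x); case/and3P: G.
rewrite /= !muln1.
have -> : count (preim (cons^~ (f :: c)) (P2 x)) (star x) = count (fun e => (f != e) && (rv (last f c) != e)) (star x).
  apply: eq_count => e /=; rewrite G /=; congr (~~ _ && ~~ _).
  by rewrite -(inj_eq rvI) HrvK eq_sym.
rewrite count2 ?Hstar //.
by rewrite /deg -[rv (last f c) == f](inj_eq rvI) HrvK.
Qed.

Definition Tt x k := count (fun c => GL x c && has_tail rv c) (P x k).
Definition J x n := \sum_(e <- star x) count (fun c => [&& GL (t e) c, hd_is (rv e) c & lst_is e c]) (P (t e) n).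

Lemma main_rec x n : 0 < n ->
  \sum_(e <- star x) ck o t rv star n (t e) = Tt x n.+2 + 2 * Nm o t rv star n x + J x n.
Proof.
move=> n0; rewrite /J /Tt -(sum_i x n0) -(sum_iii x n0).
rewrite big_distrr /= -!big_split /=; apply: eq_bigr => e _.
have h3 := count3 (P (t e) n) (GL (t e)) (hd_is (rv e)) (lst_is e).
have hr := rev_count (t e) e n.
have hs := count_splitq (P (t e) n) (GL (t e)) (hd_is (rv e)) (lst_is e).
rewrite /ck; lia.
Qed.

Lemma Nm_split x k : Nm o t rv star k x + Tt x k = ck o t rv star k x.
Proof. exact: count_andC. Qed.

Lemma J_iv x k : 0 < k -> J x k.+2 + 2 * ck o t rv star k x = deg star x * ck o t rv star k x + Tt x k.
Proof. by move=> k0; rewrite /J sum_iv_a sum_iv_b. Qed.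

Lemma J_small x n : 0 < n -> n <= 2 -> J x n = 0.
Proof.
move=> n0 n2; rewrite /J big1_seq // => e es.
apply/eqP; rewrite -leqn0 leqNgt -has_count; apply/hasP => -[c]; rewrite mem_P => /andP[_ /eqP sc] /=.
case: c sc => [|f [|g [|h c]]] //= sc; rewrite -?sc in n0 n2 => //.
  by case/and3P => _ /eqP -> /eqP; apply/eqP; exact: Hne.
case/and3P => /and3P[_ _ nb] /eqP fe /eqP ge; move: nb; by rewrite fe ge /= HrvK eqxx.
Qed.

Lemma T_small x k : k <= 2 -> Tt x k = 0.
Proof.
move=> k2; rewrite /Tt.
apply/eqP; rewrite -leqn0 leqNgt -has_count; apply/hasP => -[c]; rewrite mem_P => /andP[_ /eqP sc] /=.
case: c sc => [|f [|g [|h c]]] //= sc; rewrite -?sc in k2 => //.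
  by rewrite andbF.
  by rewrite eq_sym (negbTE (Hne f)) andbF.
rewrite /has_tail /geodesic_loop /= => /andP[/and3P[_ _ nb] /eqP ge]; move: nb; by rewrite ge eqxx.
Qed.

Local Open Scope ring_scope.

Definition cz x k : int := (ck o t rv star k x)%:Z.
Definition Tz x k : int := (Tt x k)%:Z.
Definition dz x : int := (deg star x)%:Z.
Definition Sz x k : int := (\sum_(e <- star x) ck o t rv star k (t e))%:Z.
Definition lap x k : int := laplacian t star (ck o t rv star k) x.
Definition Asum x m := \sum_(1 <= i < uphalf m) cz x (m - 2 * i).
Definition Bsum x m := \sum_(1 <= i < uphalf m) i%:Z * lap x (m - 2 * i).
Definition Gsum x m := \sum_(1 <= i < uphalf m) lap x (m - 2 * i).

Lemma lapE x k : lap x k = dz x * cz x k - Sz x k.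
Proof. by rewrite /lap /laplacian /Sz (big_morph Posz PoszD (erefl _)). Qed.

Lemma sum_shift (h : nat -> nat -> int) n : (0 < n)%N ->
  \sum_(1 <= i < uphalf n.+2) h i (n.+2 - 2 * i)%N = h 1%N n + \sum_(1 <= i < uphalf n) h i.+1 (n - 2 * i)%N.
Proof.
move=> n0; rewrite [uphalf n.+2]/= big_nat_recl; last by case: n n0.
congr (_ + _); first by congr h; lia.
by apply: eq_bigr => i _; congr h; lia.
Qed.

Lemma small_sum (h : nat -> int) n : (n <= 2)%N -> \sum_(1 <= i < uphalf n) h i = 0.
Proof. by move=> n2; rewrite big_geq //; case: n n2 => [|[|[|]]]. Qed.

Lemma A_rec x n : (0 < n)%N -> Asum x n.+2 = cz x n + Asum x n.
Proof. by move=> n0; rewrite /Asum (sum_shift (fun i j => cz x j)). Qed.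

Lemma G_rec x n : (0 < n)%N -> Gsum x n.+2 = lap x n + Gsum x n.
Proof. by move=> n0; rewrite /Gsum (sum_shift (fun i j => lap x j)). Qed.

Lemma B_rec x n : (0 < n)%N -> Bsum x n.+2 = lap x n + Bsum x n + Gsum x n.
Proof.
move=> n0; rewrite /Bsum (sum_shift (fun i j => i%:Z * lap x j)) // -addrA; congr (_ + _); first by rewrite mul1r.
rewrite /Gsum -big_split /=; apply: eq_bigr => i _.
by rewrite -addn1 PoszD mulrDl mul1r.
Qed.

Lemma Tz_formula x m : Tz x m = (dz x - 2) * Asum x m - Bsum x m.
Proof.
elim/ltn_ind: m => m IH.
case: (leqP m 2) => m2.
  by rewrite /Tz T_small // /Asum /Bsum !small_sum // mulr0 subr0.
have [n mE] : exists n, m = n.+2 by exists m.-2; lia.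
subst m.
have n0 : (0 < n)%N by lia.
have Jn : (J x n)%:Z = Tz x n + Gsum x n.
  case: (leqP n 2) => n2.
    by rewrite J_small // /Tz T_small // /Gsum small_sum.
  have [k nE] : exists k, n = k.+2 by exists n.-2; lia.
  subst n.
  have k0 : (0 < k)%N by lia.
  have Ji := congr1 Posz (J_iv x k0); rewrite !PoszD !PoszM -/(cz x k) -/(Tz x k) -/(dz x) in Ji.
  rewrite (IH k.+2) ?ltnS ?leqnSn // A_rec // B_rec // G_rec //.
  have Ik := IH k ltac:(lia).
  rewrite Ik in Ji.
  lia.
have Hm := congr1 Posz (main_rec x n0); rewrite !PoszD ?PoszM -/(Sz x n) -/(Tz x n.+2) in Hm.
have Hs := congr1 Posz (Nm_split x n); rewrite !PoszD -/(cz x n) -/(Tz x n) in Hs.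
have In := IH n ltac:(lia).
rewrite A_rec // B_rec // lapE.
lia.
Qed.

Lemma final_eq x0 m :
  ((Nm o t rv star m x0)%:Z =
     (ck o t rv star m x0)%:Z
     - ((deg star x0)%:Z - 2) *
         \sum_(1 <= i < uphalf m) (ck o t rv star (m - 2 * i) x0)%:Z
     + \sum_(1 <= i < uphalf m)
         i%:Z * laplacian t star (ck o t rv star (m - 2 * i)) x0)%R.
Proof.
change ((Nm o t rv star m x0)%:Z = cz x0 m - (dz x0 - 2) * Asum x0 m + Bsum x0 m).
have Hs := congr1 Posz (Nm_split x0 m); rewrite PoszD -/(cz x0 m) -/(Tz x0 m) Tz_formula in Hs.
lia.
Qed.

End G.

Unset Implicit Arguments.
Set Strict Implicit.

Theorem proposition3p2 (V : countType) (E : eqType) (o t : E -> V)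
    (rev : E -> E) (star : V -> seq E)
    (HX : is_serre_graph o t rev star)
    (Hconn : connected o t)
    (Hbd : bounded_degree star)
    (Hdeg1 : forall x, deg star x != 1%N)
    (x0 : V) (m : nat) (Hm : (2 < m)%N) :
  ((Nm o t rev star m x0)%:Z =
     (ck o t rev star m x0)%:Z
     - ((deg star x0)%:Z - 2) *
         \sum_(1 <= i < uphalf m) (ck o t rev star (m - 2 * i) x0)%:Z
     + \sum_(1 <= i < uphalf m)
         i%:Z * laplacian t star (ck o t rev star (m - 2 * i)) x0)%R.
Proof.
case: HX => Hne HrvK Hot Hstar Huniq.
by apply: final_eq.
Qed.
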